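(* Let $K$ be a simplicial complex on $[m]$. The quotient map $\varrho\colon\Lambda[u_1,\ldots,u_m]\otimes\mathbb Z[K]\to R^*(K)$ induces an isomorphism in cohomology.
   Context: $\mathbb Z[K]=\mathbb Z[v_1,\dots,v_m]/\mathcal I_K$, with $\mathcal I_K$ generated by monomials $v_{i_1}\cdots v_{i_k}$, $\{i_1,\dots,i_k\}\notin K$. The Koszul algebra $\Lambda[u_1,\ldots,u_m]\otimes\mathbb Z[K]$ is the differential bigraded algebra with $\operatorname{bideg}u_i=(-1,2)$, $\operatorname{bideg}v_i=(0,2)$, $du_i=v_i$, $dv_i=0$, $d$ a derivation. $R^*(K)$ is the quotient differential bigraded algebra $\Lambda[u_1,\ldots,u_m]\otimes\mathbb Z[K]/(v_i^2=u_iv_i=0,\ i=1,\dots,m)$ (the ideal generated by the $v_i^2$ and $u_iv_i$ is $d$-stable), with the induced differential and bigrading. *)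

(* Defs.v *)
From HB Require Import structures.
From mathcomp Require Import all_boot all_order all_algebra.
From mathcomp Require Import finmap mpoly.
Set Implicit Arguments. Unset Strict Implicit. Unset Printing Implicit Defensive.
Import GRing.Theory.
Local Open Scope ring_scope.

(* A simplicial complex on [m] = {0,..,m-1}: a family of subsets containing
   the empty set and closed under taking subsets (ghost vertices allowed). *)
Definition simplicial_complex (m : nat) (K : {set {set 'I_m}}) : Prop :=
  set0 \in K /\ forall s t : {set 'I_m}, t \subset s -> s \in K -> t \in K.

Definition msupport (m : nat) (mon : 'X_{1..m}) : {set 'I_m} :=
  [set i | (mon i != 0)%N].

(* Z[K] is realised as the free Z-module on the monomials v^alpha with
   support in K (canonical representatives modulo the Stanley-Reisner ideal). *)
Definition inK (m : nat) (K : {set {set 'I_m}}) (mon : 'X_{1..m}) : bool :=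
  msupport mon \in K.

Definition piK (m : nat) (K : {set {set 'I_m}}) (p : {mpoly int[m]}) : {mpoly int[m]} :=
  \sum_(mon <- msupp p | inK K mon) p@_mon *: 'X_[mon].

(* Elements of the Koszul algebra Lambda[u_1..u_m] (x) Z[K]: an element
   sum_J u_J (x) p_J (u_J = u_{j1}...u_{jk}, j1 < ... < jk) is stored as the
   finite function J |-> p_J. *)
Definition koszul (m : nat) := {ffun {set 'I_m} -> {mpoly int[m]}}.

Definition validA (m : nat) (K : {set {set 'I_m}}) (x : koszul m) : Prop :=
  forall J, all (inK K) (msupp (x J)).

(* Koszul sign: d(u_J) = sum_{j in J} (-1)^{#{i in J | i < j}} u_{J\j} v_j. *)
Definition ksign (m : nat) (J : {set 'I_m}) (j : 'I_m) : int :=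
  (-1) ^+ #|[set i in J | (i < j)%N]|.

(* The Koszul differential (d u_i = v_i, d v_i = 0, d a derivation), written
   on coefficients: the u_{J'}-component of dx. *)
Definition dA (m : nat) (K : {set {set 'I_m}}) (x : koszul m) : koszul m :=
  [ffun J' : {set 'I_m} => \sum_(j : 'I_m | j \notin J')
      ksign (j |: J') j *: piK K ('X_j * x (j |: J'))].

(* R^*(K) = Koszul algebra / (v_i^2, u_i v_i): basis u_J v_I with I in K,
   I squarefree and I disjoint from J. *)
Definition goodR (m : nat) (K : {set {set 'I_m}}) (J : {set 'I_m})
    (mon : 'X_{1..m}) : bool :=
  inK K mon && [forall i, (mon i <= (i \notin J))%N].

Definition validR (m : nat) (K : {set {set 'I_m}}) (y : koszul m) : Prop :=
  forall J, all (goodR K J) (msupp (y J)).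

(* The quotient map rho, on canonical representatives: kill the basis
   monomials lying in the ideal (v_i^2, u_i v_i). *)
Definition rho (m : nat) (K : {set {set 'I_m}}) (x : koszul m) : koszul m :=
  [ffun J => \sum_(mon <- msupp (x J) | goodR K J mon) (x J)@_mon *: 'X_[mon]].

Definition dR (m : nat) (K : {set {set 'I_m}}) (y : koszul m) : koszul m :=
  rho K (dA K y).

(* A chain map f : (A, dA) -> (B, dB) between cochain complexes of abelian
   groups (carried by subgroups PA, PB) induces an isomorphism
   H(A) = ker dA / im dA  ->  H(B) = ker dB / im dB, [a] |-> [f a]:
   the induced map is surjective and injective. *)
Definition induces_iso_in_cohomology (A B : zmodType)
    (PA : A -> Prop) (dA : A -> A) (PB : B -> Prop) (dB : B -> B) (f : A -> B)
    : Prop :=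
  (forall b, PB b -> dB b = 0 ->
     exists a, [/\ PA a, dA a = 0 &
       exists c, PB c /\ b = f a + dB c]) /\
  (forall a, PA a -> dA a = 0 ->
     (exists c, PB c /\ f a = dB c) ->
     exists a', PA a' /\ a = dA a').

(* Main.v *)
Require Import Defs.
From mathcomp Require Import all_boot all_order all_algebra.
From mathcomp Require Import finmap mpoly.
From mathcomp Require Import ring zify.
Set Implicit Arguments. Unset Strict Implicit. Unset Printing Implicit Defensive.
Import GRing.Theory.
Local Open Scope ring_scope.
Lemma sumX_coef (m : nat) (r : seq 'X_{1..m}) (P : pred 'X_{1..m})
   (g : 'X_{1..m} -> int) mon : uniq r ->
  (\sum_(mon' <- r | P mon') g mon' *: 'X_[mon'] : {mpoly int[m]})@_mon
   = if (mon \in r) && P mon then g mon else 0.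
Proof.
move=> ur; rewrite raddf_sum /=.
under eq_bigr do rewrite mcoeffZ mcoeffX.
rewrite big_mkcond /=.
case: ifP => [/andP[Hin HP]|H].
  rewrite (bigD1_seq mon) //= HP eqxx mulr1 big1 ?addr0 // => i ne.
  by case: (P i); rewrite // (negbTE ne) mulr0.
rewrite big1_seq // => i /andP[_ ir]; case: ifP => // Pi.
by case: eqP => [e|]; [subst; rewrite ir Pi in H | rewrite mulr0].
Qed.

Lemma piK_coef (m : nat) (K : {set {set 'I_m}}) p mon :
  (piK K p)@_mon = if inK K mon then p@_mon else 0.
Proof.
rewrite /piK sumX_coef ?msupp_uniq //.
case: ifP => [/andP[_ ->]//|]; case: ifP => // _; rewrite andbT => H.
by rewrite memN_msupp_eq0 // H.
Qed.

Lemma rho_coef (m : nat) (K : {set {set 'I_m}}) x J mon :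
  (rho K x J)@_mon = if goodR K J mon then (x J)@_mon else 0.
Proof.
rewrite ffunE sumX_coef ?msupp_uniq //.
case: ifP => [/andP[_ ->]//|]; case: ifP => // _; rewrite andbT => H.
by rewrite memN_msupp_eq0 // H.
Qed.

Lemma XM_coef (m : nat) (j : 'I_m) (p : {mpoly int[m]}) mon :
  ('X_j * p)@_mon = if (0 < mon j)%N then p@_(mon - U_(j))%MM else 0.
Proof.
rewrite mulrC; case: ifP => H.
  have Hle : (U_(j) <= mon)%MM by rewrite lep1mP -lt0n.
  by rewrite -{1}(submK Hle) addmC mcoeffMX.
apply: memN_msupp_eq0; rewrite (perm_mem (msuppMX _ _)).
apply/mapP => -[mm _ E]; move: H; rewrite E mnmDE mnm1E eqxx.
by case: (mm j).
Qed.

Lemma dA_coef (m : nat) (K : {set {set 'I_m}}) x J mon :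
  (dA K x J)@_mon = if inK K mon then
    \sum_(j : 'I_m | j \notin J) ksign (j |: J) j *
      (if (0 < mon j)%N then (x (j |: J))@_(mon - U_(j))%MM else 0)
  else 0.
Proof.
rewrite ffunE raddf_sum /=.
under eq_bigr do rewrite mcoeffZ piK_coef XM_coef.
by case: ifP => // _; rewrite big1 // => j _; rewrite mulr0.
Qed.
Definition mdg (m : nat) (J : {set 'I_m}) (mon : 'X_{1..m}) : {ffun 'I_m -> nat} :=
  [ffun i => (mon i + (i \in J))%N].

Definition gd (m : nat) (J : {set 'I_m}) (mon : 'X_{1..m}) : bool :=
  [forall i, ~~ (1 < mdg J mon i)%N].

Lemma goodR_gd (m : nat) (K : {set {set 'I_m}}) J mon :
  goodR K J mon = inK K mon && gd J mon.
Proof.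
rewrite /goodR /gd; congr (_ && _); apply/eq_forallb => i; rewrite ffunE.
by case: (i \in J) => /=; rewrite -leqNgt ?addn1 ?addn0.
Qed.

Lemma mdg_step (m : nat) (J : {set 'I_m}) (mon : 'X_{1..m}) j :
  j \notin J -> (0 < mon j)%N -> mdg (j |: J) (mon - U_(j))%MM = mdg J mon.
Proof.
move=> hj hm; apply/ffunP => i; rewrite !ffunE mnmBE mnm1E in_setU1.
case: (eqVneq j i) => [<-|ne] /=; last by rewrite subn0.
by rewrite (negbTE hj) addn0 subn1 addn1 prednK.
Qed.

Lemma validAP (m : nat) (K : {set {set 'I_m}}) x :
  validA K x <-> forall J mon, ~~ inK K mon -> (x J)@_mon = 0.
Proof.
split => [H J mon nK|H J].
  apply: memN_msupp_eq0; apply: contra nK => Hin; exact: (allP (H J)).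
apply/allP => mon; rewrite mcoeff_msupp; apply: contraR => nK.
by rewrite H.
Qed.

Lemma validRP (m : nat) (K : {set {set 'I_m}}) x :
  validR K x <-> forall J mon, ~~ goodR K J mon -> (x J)@_mon = 0.
Proof.
split => [H J mon nK|H J].
  apply: memN_msupp_eq0; apply: contra nK => Hin; exact: (allP (H J)).
apply/allP => mon; rewrite mcoeff_msupp; apply: contraR => nK.
by rewrite H.
Qed.

Lemma card_ltU1 (m : nat) (S : {set 'I_m}) (j k : 'I_m) : j \notin S ->
  #|[set x in j |: S | (x < k)%N]| = (#|[set x in S | (x < k)%N]| + (j < k))%N.
Proof.
move=> hj; case: (ltnP j k) => h /=.
  have -> : [set x in j |: S | (x < k)%N] = j |: [set x in S | (x < k)%N].
    by apply/setP => x; rewrite !inE; case: eqP => // ->; rewrite h.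
  by rewrite cardsU1 inE (negbTE hj) addnC.
have -> : [set x in j |: S | (x < k)%N] = [set x in S | (x < k)%N].
  apply/setP => x; rewrite !inE; case: eqP => // ->.
  by rewrite (negbTE hj) ltnNge h.
by rewrite addn0.
Qed.

Lemma ksignU1 (m : nat) (S : {set 'I_m}) (j k : 'I_m) : j \notin S ->
  ksign (j |: S) k = ksign S k * (-1) ^+ (j < k)%N.
Proof. by move=> hj; rewrite /ksign card_ltU1 // exprD. Qed.

Lemma ksign_self (m : nat) (S : {set 'I_m}) (j : 'I_m) : j \notin S ->
  ksign (j |: S) j = ksign S j.
Proof. by move=> hj; rewrite ksignU1 // ltnn mulr1. Qed.

Lemma ksign_sq (m : nat) (S : {set 'I_m}) (j : 'I_m) : ksign S j * ksign S j = 1.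
Proof. by rewrite /ksign -signr_odd; case: odd; rewrite ?expr0 ?expr1 ?mulr1 ?mulrNN ?mulr1. Qed.

Lemma ksign_main (m : nat) (J : {set 'I_m}) (i k : 'I_m) : i \in J -> k \notin J ->
  ksign (k |: J) k * ksign (k |: J) i = - (ksign J i * ksign (k |: (J :\ i)) k).
Proof.
move=> hi hk.
have hk' : k \notin J :\ i by rewrite inE negb_and hk orbT.
have hi' : i \notin J :\ i by rewrite setD11.
rewrite ksign_self // ksignU1 // ksign_self //.
rewrite -{1}(setD1K hi) ksignU1 //.
have ne : i != k by apply: contraNneq hk => <-.
have : (i < k)%N || (k < i)%N by rewrite -neq_ltn.
case: (ltngtP i k) => // _ _; rewrite ?expr0 ?expr1; ring.
Qed.

Lemma gd_step (m : nat) (J : {set 'I_m}) (mon : 'X_{1..m}) j :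
  j \notin J -> (0 < mon j)%N -> gd (j |: J) (mon - U_(j))%MM = gd J mon.
Proof. by move=> hj hm; rewrite /gd mdg_step. Qed.
Lemma kzD (m : nat) (x y : koszul m) J : (x + y) J = x J + y J.
Proof. by rewrite ffunE. Qed.
Lemma kzN (m : nat) (x : koszul m) J : (- x) J = - x J.
Proof. by rewrite ffunE. Qed.
Lemma kz0 (m : nat) J : (0 : koszul m) J = 0.
Proof. by rewrite ffunE. Qed.

Lemma kz_ext (m : nat) (x y : koszul m) :
  (forall J mon, (x J)@_mon = (y J)@_mon) -> x = y.
Proof. by move=> H; apply/ffunP => J; apply/mpolyP => mon; exact: H. Qed.

Lemma rho_id (m : nat) (K : {set {set 'I_m}}) y : validR K y -> rho K y = y.
Proof.
move/validRP => H; apply: kz_ext => J mon; rewrite rho_coef.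
by case: ifP => // /negbT /H ->.
Qed.

Lemma validR_A (m : nat) (K : {set {set 'I_m}}) y : validR K y -> validA K y.
Proof.
move/validRP => H; apply/validAP => J mon nK; apply: H.
by rewrite goodR_gd negb_and nK.
Qed.

Lemma rho_validR (m : nat) (K : {set {set 'I_m}}) x : validR K (rho K x).
Proof. by apply/validRP => J mon nG; rewrite rho_coef (negbTE nG). Qed.

Lemma dA_validR (m : nat) (K : {set {set 'I_m}}) y : validR K y -> validR K (dA K y).
Proof.
move/validRP => H; apply/validRP => J mon; rewrite goodR_gd negb_and dA_coef.
case: ifP => //= hK hg; rewrite big1 // => j hj.
case: ifP => hm; last by rewrite mulr0.
by rewrite H ?mulr0 // goodR_gd negb_and gd_step // hg orbT.
Qed.

Lemma rho_dA_bad (m : nat) (K : {set {set 'I_m}}) (z : koszul m) :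
  (forall J mon, gd J mon -> (z J)@_mon = 0) -> rho K (dA K z) = 0.
Proof.
move=> H; apply: kz_ext => J mon; rewrite rho_coef kz0 mcoeff0 goodR_gd.
case/boolP: (gd J mon) => hg; last by rewrite andbF.
rewrite andbT; case: ifP => // hK; rewrite dA_coef hK big1 // => j hj.
case: ifP => hm; last by rewrite mulr0.
by rewrite H ?mulr0 // gd_step.
Qed.

Lemma dA_add (m : nat) (K : {set {set 'I_m}}) x y : dA K (x + y) = dA K x + dA K y.
Proof.
apply: kz_ext => J mon; rewrite kzD mcoeffD !dA_coef.
case: ifP => _; last by rewrite addr0.
rewrite -big_split; apply: eq_bigr => j _; rewrite kzD mcoeffD.
by case: ifP => _; rewrite ?addr0 ?mulr0 // mulrDr.
Qed.

Lemma dA_opp (m : nat) (K : {set {set 'I_m}}) x : dA K (- x) = - dA K x.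
Proof.
apply: kz_ext => J mon; rewrite kzN mcoeffN !dA_coef.
case: ifP => _; last by rewrite oppr0.
rewrite -sumrN; apply: eq_bigr => j _; rewrite kzN mcoeffN.
by case: ifP => _; rewrite ?oppr0 ?mulr0 // mulrN.
Qed.

Lemma dA0 (m : nat) (K : {set {set 'I_m}}) : dA K 0 = 0.
Proof. by apply: (addrI (dA K 0)); rewrite addr0 -dA_add addr0. Qed.

Lemma rho0 (m : nat) (K : {set {set 'I_m}}) : rho K 0 = 0.
Proof. by apply: kz_ext => J mon; rewrite rho_coef !kz0 mcoeff0; case: ifP. Qed.

Lemma validR0 (m : nat) (K : {set {set 'I_m}}) : validR K 0.
Proof. by apply/validRP => J mon _; rewrite kz0 mcoeff0. Qed.

Lemma validR_opp (m : nat) (K : {set {set 'I_m}}) x : validR K x -> validR K (- x).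
Proof. by move/validRP => H; apply/validRP => J mon h; rewrite kzN mcoeffN H ?oppr0. Qed.

Lemma validA_add (m : nat) (K : {set {set 'I_m}}) x y :
  validA K x -> validA K y -> validA K (x + y).
Proof.
move/validAP => H1 /validAP H2; apply/validAP => J mon h.
by rewrite kzD mcoeffD H1 ?H2 ?addr0.
Qed.

Lemma validA_opp (m : nat) (K : {set {set 'I_m}}) x : validA K x -> validA K (- x).
Proof. by move/validAP => H; apply/validAP => J mon h; rewrite kzN mcoeffN H ?oppr0. Qed.
Definition Hc (m : nat) (x : koszul m) (J : {set 'I_m}) (mon : 'X_{1..m}) : int :=
  if [pick i | (1 < mdg J mon i)%N] is Some i then
    (if i \in J then ksign J i * (x (J :\ i))@_(mon + U_(i))%MM else 0) else 0.

Definition HS (m : nat) (x : koszul m) (J : {set 'I_m}) : seq 'X_{1..m} :=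
  flatten [seq [seq (mon - U_(i))%MM | mon <- msupp (x (J :\ i))] | i <- enum 'I_m].

Definition Hh (m : nat) (x : koszul m) : koszul m :=
  [ffun J => \sum_(mon <- undup (HS x J)) Hc x J mon *: ('X_[mon] : {mpoly int[m]})].

Lemma H_coef (m : nat) (x : koszul m) J mon : (Hh x J)@_mon = Hc x J mon.
Proof.
rewrite ffunE (@sumX_coef _ _ xpredT) ?undup_uniq // mem_undup andbT.
case: ifP => // hn; symmetry; rewrite /Hc; case: pickP => // i _.
case: ifP => // hi; rewrite memN_msupp_eq0 ?mulr0 //.
apply: contraFN hn => hin; apply/flattenP.
exists [seq (mon0 - U_(i))%MM | mon0 <- msupp (x (J :\ i))].
  by apply/mapP; exists i => //; rewrite mem_enum.
by apply/mapP; exists (mon + U_(i))%MM => //; rewrite addmK.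
Qed.

Lemma H_valid (m : nat) (K : {set {set 'I_m}}) x :
  simplicial_complex K -> validA K x -> validA K (Hh x).
Proof.
move=> [_ SC] /validAP H; apply/validAP => J mon nK; rewrite H_coef /Hc.
case: pickP => // i _; case: ifP => // hi; rewrite H ?mulr0 //.
apply: contra nK; rewrite /inK => hK; apply: SC hK.
by apply/subsetP => k; rewrite !inE mnmDE; case: (mon k).
Qed.

Lemma Hc_step (m : nat) (x : koszul m) (J : {set 'I_m}) (mon : 'X_{1..m}) j :
  j \notin J -> (0 < mon j)%N -> Hc x (j |: J) (mon - U_(j))%MM =
  if [pick i | (1 < mdg J mon i)%N] is Some i then
    (if i \in j |: J then ksign (j |: J) i * (x ((j |: J) :\ i))@_(mon - U_(j) + U_(i))%MM
     else 0) else 0.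
Proof. by move=> hj hm; rewrite /Hc mdg_step. Qed.

Lemma setU1D1 (m : nat) (J : {set 'I_m}) (k i : 'I_m) : k != i ->
  (k |: J) :\ i = k |: (J :\ i).
Proof.
move=> ne; apply/setP => y; rewrite !inE.
case: (eqVneq y i) => [->|_]; rewrite ?andbT ?andbF //= eq_sym (negbTE ne).
by [].
Qed.
Lemma H_main (m : nat) (K : {set {set 'I_m}}) (z : koszul m) :
  validA K z -> (forall J mon, gd J mon -> (z J)@_mon = 0) -> dA K z = 0 ->
  dA K (Hh z) = z.
Proof.
move=> /validAP Hv Hb Hd; apply: kz_ext => J mon; rewrite dA_coef.
case: ifP => hK; last by rewrite Hv // hK.
have E : forall j, j \in [pred j | j \notin J] ->
   ksign (j |: J) j * (if (0 < mon j)%N then (Hh z (j |: J))@_(mon - U_(j))%MM else 0)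
 = ksign (j |: J) j * (if (0 < mon j)%N then
   (if [pick i | (1 < mdg J mon i)%N] is Some i then
    (if i \in j |: J then ksign (j |: J) i * (z ((j |: J) :\ i))@_(mon - U_(j) + U_(i))%MM
     else 0) else 0) else 0).
  by move=> j hj; case: ifP => hm //; rewrite H_coef Hc_step.
rewrite (eq_bigr _ E) {E}.
case: pickP => [i hi | hn]; last first.
  rewrite Hb; last by apply/forallP => k; rewrite hn.
  by rewrite big1 // => j _; case: ifP; rewrite mulr0.
move: hi; rewrite ffunE; case: (boolP (i \in J)) => hiJ hi.
- have hmi : (0 < mon i)%N by move: hi; rewrite addn1.
  have E0 : (dA K z (J :\ i))@_(mon + U_(i))%MM = 0 by rewrite Hd kz0 mcoeff0.
  rewrite dA_coef in E0.
  have eK : inK K (mon + U_(i))%MM = inK K mon.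
    rewrite /inK /msupport; congr (_ \in K); apply/setP => k; rewrite !inE mnmDE mnm1E.
    case: (eqVneq i k) => [<-|_]; last by rewrite addn0.
    by rewrite addn1; move: hmi; case: (mon i).
  rewrite eK hK (bigD1 i) /= in E0; last by rewrite setD11.
  rewrite setD1K // mnmDE mnm1E eqxx addn1 /= addmK in E0.
  move/eqP: E0; rewrite addrC addr_eq0 => /eqP E0.
  transitivity (- ksign J i *
    \sum_(k | (k \notin J :\ i) && (k != i)) ksign (k |: (J :\ i)) k *
      (if (0 < (mon + U_(i))%MM k)%N then (z (k |: (J :\ i)))@_((mon + U_(i)) - U_(k))%MM
       else 0)); last first.
    by rewrite E0 mulrN mulNr opprK mulrA ksign_sq mul1r.
  rewrite mulr_sumr; apply: eq_big => [k|k hk].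
    by case: (eqVneq k i) => [->|ne]; rewrite !inE ?hiJ ?andbF ?ne // andbT.
  have ne : k != i by apply: contraNneq hk => ->.
  rewrite in_setU1 hiJ orbT mnmDE mnm1E (negbTE (negbT (introF eqP _))); last first.
    by move=> e; rewrite e eqxx in ne.
  rewrite addn0; case: ifP => hm; last by rewrite !mulr0.
  rewrite setU1D1 //.
  have -> : (mon - U_(k) + U_(i))%MM = (mon + U_(i) - U_(k))%MM.
    apply/mnmP => y; rewrite !(mnmDE, mnmBE, mnm1E).
    case: (eqVneq k y) => [<-|_]; last by rewrite !subn0.
    by case: (i == k) => /=; lia.
  by rewrite mulrA ksign_main //; ring.
- rewrite addn0 in hi; have hmi : (0 < mon i)%N by lia.
  rewrite (bigD1 i) //= hmi setU11 setU1K // submK; last by rewrite lep1mP -lt0n.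
  rewrite mulrA ksign_sq mul1r big1 ?addr0 // => j /andP[hj ne].
  rewrite in_setU1 (negbTE hiJ) orbF eq_sym (negbTE ne).
  by case: ifP; rewrite mulr0.
Qed.
Theorem lemma4p4 (m : nat) (K : {set {set 'I_m}}) :
  simplicial_complex K ->
  induces_iso_in_cohomology (validA K) (dA K) (validR K) (dR K) (rho K).
Proof.
move=> SC; split.
- move=> b Hb Hdb; exists b; split.
  + exact: validR_A.
  + by rewrite -(rho_id (dA_validR Hb)).
  + exists 0; split; first exact: validR0.
    by rewrite /dR dA0 rho0 addr0 rho_id.
- move=> a Ha Hda [c [Hc Hac]].
  have Hc' : dR K c = dA K c := rho_id (dA_validR Hc).
  set z := a - rho K a.
  have Hz : validA K z := validA_add Ha (validA_opp (validR_A (rho_validR K a))).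
  have Hzb : forall J mon, gd J mon -> (z J)@_mon = 0.
    move=> J mon hg; rewrite /z kzD kzN mcoeffD mcoeffN rho_coef goodR_gd hg andbT.
    case: ifP => hK; first by rewrite subrr.
    by move/validAP: Ha => Ha; rewrite Ha ?hK // oppr0 addr0.
  have Hdz : dA K z = 0.
    have e : dA K z = - dA K (rho K a) by rewrite /z dA_add dA_opp Hda add0r.
    have vz : validR K (dA K z) by rewrite e; apply/validR_opp/dA_validR/rho_validR.
    by rewrite -(rho_id vz) rho_dA_bad.
  exists (c + Hh z); split.
  + exact: validA_add (validR_A Hc) (H_valid SC Hz).
  + by rewrite dA_add H_main // -Hc' -Hac /z addrC subrK.
Qed.
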